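(* Let $X$ be an $n$-dimensional polyhedral normed space and let $Y \subseteq X$ be a subspace of dimension $k$, where $1 \leq k \leq n-1$. Suppose that some $P_0 \in \mathcal{P}_{\min}(X, Y)$ has at most $m$ norming pairs. Then $\dim \mathcal{P}_{\min}(X, Y) \geq k(n-k)-m+1$.
   Context: A normed space $X=(\mathbb{R}^n,\|\cdot\|)$ is polyhedral if its unit ball is a convex polytope. A projection onto $Y$ is a linear $P:X\to Y$ with $P|_Y=\mathrm{id}_Y$; $\lambda(Y,X)$ is the infimum of the operator norms of projections and $\mathcal{P}_{\min}(X,Y)$ the set of projections of norm $\lambda(Y,X)$; $\dim\mathcal{P}_{\min}(X,Y)$ is the affine dimension of this convex subset of $\mathcal{L}(X,X)$. A norming pair for a projection $P$ is a pair $(x,f)\in \mathrm{ext}\,B_X\times \mathrm{ext}\,B_{X^*}$ (extreme points of the unit balls of $X$ and $X^*$) with $f(P(x))=\|P\|$. *)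

(* Defs.v *)
From HB Require Import structures.
From mathcomp Require Import all_boot all_order all_algebra.
From mathcomp Require Import boolp classical_sets reals.
Set Implicit Arguments. Unset Strict Implicit. Unset Printing Implicit Defensive.
Import Order.TTheory GRing.Theory Num.Theory.
Local Open Scope ring_scope.
Local Open Scope classical_set_scope.

Section PolyNorm.
Variables (R : realType) (n : nat).
Local Notation vec := 'rV[R]_n.
Local Notation op := 'M[R]_n.

(* Convention: vectors of X = R^n are row vectors, an operator P : L(X,X)
   is a matrix acting by x |-> x *m P, and a functional f in X^* is a row
   vector acting by x |-> dot f x. *)
Definition dot (f x : vec) : R := \sum_(i < n) f 0 i * x 0 i.

Definition is_norm (N : vec -> R) : Prop :=
  [/\ forall x, N x = 0 -> x = 0,
      forall (a : R) x, N (a *: x) = `|a| * N x &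
      forall x y, N (x + y) <= N x + N y].

Definition in_conv_hull (V : seq vec) (x : vec) : Prop :=
  exists l : 'I_(size V) -> R,
    [/\ forall i, 0 <= l i, \sum_i l i = 1 &
        x = \sum_i l i *: V`_i].

Definition unit_ball (N : vec -> R) : set vec := [set x | N x <= 1].

Definition polyhedral (N : vec -> R) : Prop :=
  exists V : seq vec, forall x, unit_ball N x <-> in_conv_hull V x.

Definition dual_unit_ball (N : vec -> R) : set vec :=
  [set f | forall x, N x <= 1 -> dot f x <= 1].

Definition extreme_point (C : set vec) (x : vec) : Prop :=
  C x /\ forall y z (t : R), C y -> C z -> 0 < t < 1 ->
    x = t *: y + (1 - t) *: z -> y = z.

Definition opnorm (N : vec -> R) (P : op) : R :=
  sup [set N (x *m P) | x in unit_ball N].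

(* projections onto the subspace Y (= row space of the matrix Y) *)
Definition is_projection (Y : op) (P : op) : Prop :=
  (P <= Y)%MS /\ forall x : vec, (x <= Y)%MS -> x *m P = x.

Definition rel_proj_const (N : vec -> R) (Y : op) : R :=
  inf [set opnorm N P | P in is_projection Y].

Definition Pmin (N : vec -> R) (Y : op) : set op :=
  [set P | is_projection Y P /\ opnorm N P = rel_proj_const N Y].

Definition norming_pair (N : vec -> R) (P : op) (xf : vec * vec) : Prop :=
  [/\ extreme_point (unit_ball N) xf.1,
      extreme_point (dual_unit_ball N) xf.2 &
      dot xf.2 (xf.1 *m P) = opnorm N P].

Definition aff_indep_in (S : set op) (d : nat) : Prop :=
  exists P : 'I_d.+1 -> op,
    (forall i, S (P i)) /\ free [seq P (lift ord0 i) - P ord0 | i : 'I_d].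

(* affine dimension of S (the dimension of its affine hull);
   any affinely independent family in L(X,X) has at most n*n+1 points *)
Definition affdim (S : set op) : nat :=
  \max_(d < (n * n).+1 | `[< aff_indep_in S d >]) d.

End PolyNorm.

(* Main.v *)
Require Import Defs.
From HB Require Import structures.
From mathcomp Require Import all_boot all_order all_algebra.
From mathcomp Require Import boolp classical_sets reals.
From mathcomp Require Import ring lra zify.
Set Implicit Arguments. Unset Strict Implicit. Unset Printing Implicit Defensive.
Import Order.TTheory GRing.Theory Num.Theory.
Local Open Scope ring_scope.

Section Dot.
Variables (R : realType) (n : nat).
Local Notation vec := 'rV[R]_n.
Local Notation dot := (@dot R n).

Lemma dotC (f x : vec) : dot f x = dot x f.
Proof. by rewrite /Defs.dot; apply: eq_bigr => i _; rewrite mulrC. Qed.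
Lemma dotDr (f x y : vec) : dot f (x + y) = dot f x + dot f y.
Proof. by rewrite /Defs.dot -big_split; apply: eq_bigr => i _; rewrite !mxE mulrDr. Qed.
Lemma dotZr (f x : vec) a : dot f (a *: x) = a * dot f x.
Proof. by rewrite /Defs.dot mulr_sumr; apply: eq_bigr => i _; rewrite !mxE mulrCA. Qed.
Lemma dotDl (f g x : vec) : dot (f + g) x = dot f x + dot g x.
Proof. by rewrite dotC dotDr !(dotC x). Qed.
Lemma dotZl (f x : vec) a : dot (a *: f) x = a * dot f x.
Proof. by rewrite dotC dotZr dotC. Qed.
Lemma dot0r (f : vec) : dot f 0 = 0.
Proof. by rewrite /Defs.dot big1 // => i _; rewrite mxE mulr0. Qed.
Lemma dot0l (f : vec) : dot 0 f = 0.
Proof. by rewrite dotC dot0r. Qed.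
Lemma dotNr (f x : vec) : dot f (- x) = - dot f x.
Proof. by rewrite -scaleN1r dotZr mulN1r. Qed.
Lemma dotNl (f x : vec) : dot (- f) x = - dot f x.
Proof. by rewrite dotC dotNr dotC. Qed.
Lemma dotBr (f x y : vec) : dot f (x - y) = dot f x - dot f y.
Proof. by rewrite dotDr dotNr. Qed.
Lemma dotBl (f g x : vec) : dot (f - g) x = dot f x - dot g x.
Proof. by rewrite dotDl dotNl. Qed.
Lemma dot_sumr I (r : seq I) P (F : I -> vec) f :
  dot f (\sum_(i <- r | P i) F i) = \sum_(i <- r | P i) dot f (F i).
Proof.
elim/big_rec2: _ => [|i y1 y2 _ <-]; first by rewrite dot0r.
by rewrite dotDr.
Qed.
Lemma dot_sumr_ord m (F : 'I_m -> R) (V : 'I_m -> vec) f :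
  dot f (\sum_i F i *: V i) = \sum_i F i * dot f (V i).
Proof. by rewrite dot_sumr; apply: eq_bigr => i _; rewrite dotZr. Qed.
Lemma dot_self_gt0 (d : vec) : d != 0 -> 0 < dot d d.
Proof.
move=> dn0; have [i di] : exists i, d 0 i != 0.
  apply/existsP; apply: contraR dn0; rewrite negb_exists => /forallP H.
  apply/eqP/matrixP => a b; rewrite (ord1 a) mxE; exact/eqP/negPn/H.
rewrite /Defs.dot (bigD1 i) //=; apply: ltr_pwDl.
  by rewrite -expr2 lt_def sqr_ge0 andbT sqrf_eq0.
by apply: sumr_ge0 => j _; rewrite -expr2 sqr_ge0.
Qed.

(* Fourier-Motzkin *)
Inductive cone (s : seq (vec * R)) : vec -> R -> Prop :=
| cone0 : cone s 0 0
| coneA a b a' b' : cone s a b -> cone s a' b' -> cone s (a + a') (b + b')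
| coneZ c a b : 0 <= c -> cone s a b -> cone s (c *: a) (c * b)
| coneI a b : (a, b) \in s -> cone s a b.

Lemma cone_mono s s' a b : (forall c, c \in s' -> cone s c.1 c.2) ->
  cone s' a b -> cone s a b.
Proof.
move=> H; elim.
- exact: cone0.
- by move=> ? ? ? ? _ h1 _ h2; apply: coneA.
- by move=> ? ? ? c0 _ h; apply: coneZ.
- by move=> a0 b0 /H.
Qed.

Lemma interp (Ls Us : seq R) : (forall l u, l \in Ls -> u \in Us -> l <= u) ->
  exists t, (forall l, l \in Ls -> l <= t) /\ (forall u, u \in Us -> t <= u).
Proof.
elim: Ls => [|a Ls IH] H.
  clear H; elim: Us => [|b Us [t [_ Ht]]]; first by exists 0.
  exists (Num.min b t); split => // u; rewrite inE => /orP[/eqP->|/Ht].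
    by rewrite ge_min lexx.
  by rewrite ge_min => ->; rewrite orbT.
have [t [H1 H2]] : exists t, (forall l, l \in Ls -> l <= t) /\ (forall u, u \in Us -> t <= u).
  by apply: IH => l u lL uU; apply: H => //; rewrite inE lL orbT.
exists (Num.max a t); split.
  move=> l; rewrite inE => /orP[/eqP->|/H1 lt]; rewrite le_max ?lexx //.
  by rewrite lt orbT.
by move=> u uU; rewrite ge_max H2 // andbT; apply: H => //; rewrite inE eqxx.
Qed.

Definition supp_lt (j : nat) (a : vec) := forall i : 'I_n, (j <= i)%N -> a 0 i = 0.

Definition feasible (s : seq (vec * R)) := exists x, forall c, c \in s -> dot c.1 x <= c.2.

Lemma FM j : forall s : seq (vec * R), (forall c, c \in s -> supp_lt j c.1) ->
  ~ feasible s -> exists b, b < 0 /\ cone s 0 b.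
Proof.
elim: j => [|j IH] s Hs Hf.
  have Hz c : c \in s -> c.1 = 0.
    move=> cs; apply/matrixP => a b; rewrite (ord1 a) mxE; exact: Hs.
  have [c cs cneg] : exists2 c, c \in s & c.2 < 0.
    apply: contra_notP Hf => H; exists 0 => c cs; rewrite dot0r leNgt.
    by apply/negP => cn; apply: H; exists c.
  exists c.2; split => //; rewrite -(Hz c cs); apply: coneI; by case: c cs {cneg}.
have [jn|jn] := ltnP j n; last first.
  apply: IH Hf => c cs i ji; have := ltn_ord i; rewrite ltnNge.
  by move: (leq_trans jn ji) => ->.
pose o := Ordinal jn.
pose Z := [seq c <- s | (c.1 : vec) 0 o == 0].
pose Ps := [seq c <- s | 0 < (c.1 : vec) 0 o].
pose Ns := [seq c <- s | (c.1 : vec) 0 o < 0].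
pose comb (p q : vec * R) : vec * R := ((- q.1 0 o) *: p.1 + (p.1 0 o) *: q.1, (- q.1 0 o) * p.2 + p.1 0 o * q.2).
pose s' := Z ++ [seq comb pq.1 pq.2 | pq <- [seq (p, q) | p <- Ps, q <- Ns]].
have Hs'c : forall c, c \in s' -> cone s c.1 c.2.
  move=> c; rewrite mem_cat => /orP[|].
    by rewrite mem_filter => /andP[_ cs]; apply: coneI; case: c cs.
  move=> /mapP [[p q] /allpairsP [[p' q'] /= [pP qN [-> ->]]] ->] /=.
  move: pP qN; rewrite !mem_filter => /andP[p0 ps] /andP[q0 qs].
  apply: coneA; apply: coneZ; rewrite ?oppr_ge0 ?ltW //; apply: coneI.
    by case: p' ps {p0}.
  by case: q' qs {q0}.
have [Hf'|Hf'] := pselect (feasible s'); last first.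
  suff [b [b0 cb]] : exists b, b < 0 /\ cone s' 0 b.
    exists b; split => //; exact: cone_mono cb.
  apply: IH Hf' => c; rewrite mem_cat => /orP[|].
    rewrite mem_filter => /andP[/eqP c0 cs] i ji.
    have [ei|ne] := boolP (j == i).
      by have -> : i = o by apply: val_inj; rewrite /= (eqP ei).
    by apply: Hs => //; rewrite ltn_neqAle ne ji.
  move=> /mapP [[p q] /allpairsP [[p' q'] /= [pP qN [-> ->]]] ->] /= i ji.
  move: pP qN; rewrite !mem_filter => /andP[p0 ps] /andP[q0 qs].
  rewrite !mxE; have [ei|ne] := boolP (j == i).
    have -> : i = o by apply: val_inj; rewrite /= (eqP ei).
    by rewrite mulNr mulrC addNr.
  have ji' : (j.+1 <= i)%N by rewrite ltn_neqAle ne ji.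
  by rewrite (Hs _ ps i ji') (Hs _ qs i ji') !mulr0 addr0.
case: Hf' => x Hx.
pose L (q : vec * R) := (q.2 - dot q.1 x) / q.1 0 o.
have [t [Ht1 Ht2]] : exists t, (forall l, l \in [seq L q | q <- Ns] -> l <= t) /\ (forall u, u \in [seq L p | p <- Ps] -> t <= u).
  apply: interp.
  move=> l u /mapP [q qN ->] /mapP [p pP ->].
  have := Hx (comb p q); rewrite mem_cat; have -> : comb p q \in [seq comb pq.1 pq.2 | pq <- [seq (p, q) | p <- Ps, q <- Ns]].
    by apply/mapP; exists (p, q) => //; apply/allpairsP; exists (p, q).
  rewrite orbT => /(_ isT) /=; rewrite dotDl !dotZl.
  move: pP qN; rewrite !mem_filter => /andP[p0 _] /andP[q0 _].
  rewrite /L; set al := p.1 0 o; set be := q.1 0 o; set u1 := p.2 - dot p.1 x; set w := q.2 - dot q.1 x.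
  move=> h.
  have hw : w = (w / be) * be by rewrite mulfVK // ltr0_neq0.
  have hu : u1 = (u1 / al) * al by rewrite mulfVK // gt_eqF.
  move: (w / be) (u1 / al) hw hu => A B hw hu.
  have h2 : 0 <= (al * be) * (A - B).
    rewrite /u1 /w in hw hu. nra.
  have albe : al * be < 0 by rewrite pmulr_rlt0.
  by move: h2; rewrite nmulr_rge0 // subr_le0.
case: Hf; exists (x + t *: \row_i (i == o)%:R) => c cs.
rewrite dotDr dotZr.
have -> : dot c.1 (\row_i (i == o)%:R) = c.1 0 o.
  rewrite /Defs.dot (bigD1 o) //= big1 ?mxE ?eqxx ?mulr1 ?addr0 // => i io.
  by rewrite mxE (negbTE io) mulr0.
have [c0|c0|c0] := ltgtP (c.1 0 o) 0.
- have : L c <= t by apply: Ht1; apply/mapP; exists c => //; rewrite mem_filter c0.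
  rewrite /L ler_ndivrMr // => h; lra.
- have : t <= L c by apply: Ht2; apply/mapP; exists c => //; rewrite mem_filter c0.
  rewrite /L ler_pdivlMr // => h; lra.
- rewrite c0 mulr0 addr0; apply: Hx; rewrite mem_cat mem_filter c0 eqxx cs //.
Qed.

End Dot.


Section Norm.
Variables (R : realType) (n : nat) (N : 'rV[R]_n -> R).
Hypothesis hN : is_norm N.
Local Notation vec := 'rV[R]_n.
Local Notation dot := (@dot R n).

Lemma N0 : N 0 = 0.
Proof. case: hN => _ hZ _; by rewrite -(scale0r (0 : vec)) hZ normr0 mul0r. Qed.
Lemma NZ a x : N (a *: x) = `|a| * N x.
Proof. by case: hN => _ hZ _; rewrite hZ. Qed.
Lemma ND x y : N (x + y) <= N x + N y.
Proof. by case: hN => _ _ h; apply: h. Qed.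
Lemma Nge0 x : 0 <= N x.
Proof.
have h := ND x (- x); move: h; rewrite subrr N0 -scaleN1r NZ normrN normr1 mul1r => h; lra.
Qed.
Lemma Neq0 x : N x = 0 -> x = 0.
Proof. by case: hN => h _ _; apply: h. Qed.
Lemma Ngt0 x : x != 0 -> 0 < N x.
Proof. by move=> xn; rewrite lt_def Nge0 andbT; apply: contra xn => /eqP/Neq0 ->. Qed.

Lemma N_sum I (r : seq I) P (F : I -> vec) :
  N (\sum_(i <- r | P i) F i) <= \sum_(i <- r | P i) N (F i).
Proof.
elim/big_rec2: _ => [|i y1 y2 _ h]; first by rewrite N0.
by apply: le_trans (ND _ _) _; rewrite lerD2l.
Qed.

Lemma N_conv m (l : 'I_m -> R) (u : 'I_m -> vec) :
  (forall i, 0 <= l i) -> N (\sum_i l i *: u i) <= \sum_i l i * N (u i).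
Proof.
move=> l0; apply: le_trans (N_sum _ _ _) _; apply: ler_sum => i _.
by rewrite NZ ger0_norm.
Qed.

Lemma mem_conv (W : seq vec) u : u \in W -> in_conv_hull W u.
Proof.
move=> uW; have iW : (index u W < size W)%N by rewrite index_mem.
pose i0 := Ordinal iW.
exists (fun i => (i == i0)%:R); split.
- by move=> i; rewrite ler0n.
- by rewrite (bigD1 i0) //= eqxx big1 ?addr0 // => i /negbTE ->.
- rewrite (bigD1 i0) //= eqxx scale1r big1 ?addr0 ?nth_index //.
  by move=> i /negbTE ->; rewrite scale0r.
Qed.

Lemma conv_comb m (l : 'I_m -> R) (u : 'I_m -> vec) W :
  (forall i, 0 <= l i) -> \sum_i l i = 1 ->
  (forall i, 0 < l i -> in_conv_hull W (u i)) ->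
  in_conv_hull W (\sum_i l i *: u i).
Proof.
move=> l0 l1 hu.
have [mu hmu] : exists mu : 'I_m -> 'I_(size W) -> R, forall i, 0 < l i ->
   [/\ forall j, 0 <= mu i j, \sum_j mu i j = 1 & u i = \sum_j mu i j *: W`_j].
  have H : forall i, exists mu : 'I_(size W) -> R, 0 < l i ->
   [/\ forall j, 0 <= mu j, \sum_j mu j = 1 & u i = \sum_j mu j *: W`_j].
    move=> i; have [li|li] := boolP (0 < l i).
      by have [mu hm] := hu i li; exists mu.
    exists (fun _ => 0) => h; exfalso; by move/negP: li.
  by have [mu hmu] := choice H; exists mu.
have lz i : ~~ (0 < l i) -> l i = 0.
  by move=> h; apply/eqP; rewrite eq_le l0 andbT leNgt.
exists (fun j => \sum_i l i * mu i j); split.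
- move=> j; apply: sumr_ge0 => i _; have [li|li] := boolP (0 < l i).
    by case: (hmu i li) => h _ _; rewrite mulr_ge0 // ltW.
  by rewrite lz // mul0r.
- rewrite exchange_big /= -l1; apply: eq_bigr => i _; rewrite -mulr_sumr.
  have [li|li] := boolP (0 < l i); first by case: (hmu i li) => _ -> _; rewrite mulr1.
  by rewrite lz // !mul0r.
- have -> : \sum_i l i *: u i = \sum_i \sum_j (l i * mu i j) *: W`_j.
    apply: eq_bigr => i _; have [li|li] := boolP (0 < l i).
      case: (hmu i li) => _ _ ->; rewrite scaler_sumr; apply: eq_bigr => j _.
      by rewrite scalerA.
    by rewrite lz // scale0r big1 // => j _; rewrite mul0r scale0r.
  rewrite exchange_big /=; apply: eq_bigr => j _; by rewrite scaler_suml.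
Qed.

Definition desc (V : seq vec) := forall x, N x <= 1 <-> in_conv_hull V x.

Lemma dual_le f z : dual_unit_ball N f -> dot f z <= N z.
Proof.
move=> hf; have [z0|z0] := eqVneq z 0; first by rewrite z0 dot0r N0.
have Nz := Ngt0 z0.
have Nz' : 0 <= N z := ltW Nz.
have := hf ((N z)^-1 *: z); rewrite NZ ger0_norm ?invr_ge0 // mulVf ?gt_eqF // lexx.
by move=> /(_ isT); rewrite dotZr -(ler_pM2l Nz) mulrA mulfV ?gt_eqF // mul1r mulr1.
Qed.

Section WithV.
Variable V : seq vec.
Hypothesis hV : desc V.

Lemma V_ball (i : 'I_(size V)) : N V`_i <= 1.
Proof. apply/hV; apply: mem_conv; apply: mem_nth; exact: ltn_ord. Qed.
Lemma V_ball' v : v \in V -> N v <= 1.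
Proof. by move=> vV; apply/hV; apply: mem_conv. Qed.

Lemma dualP f : dual_unit_ball N f <-> forall i : 'I_(size V), dot f V`_i <= 1.
Proof.
split; first by move=> hf i; apply: hf; exact: V_ball.
move=> hf x /hV [l [l0 l1 ->]]; rewrite dot_sumr_ord -l1; apply: ler_sum => i _.
by rewrite -[leRHS]mulr1 ler_wpM2l.
Qed.

Lemma dual_attain z : exists f, dual_unit_ball N f /\ dot f z = N z.
Proof.
have [z0|z0] := eqVneq z 0.
  exists 0; split; last by rewrite z0 dot0r N0.
  by move=> x _; rewrite dot0l ler01.
have Nz := Ngt0 z0.
pose u := (N z)^-1 *: z.
have Nz' : 0 <= N z := ltW Nz.
have Nu : N u = 1 by rewrite /u NZ ger0_norm ?invr_ge0 // mulVf ?gt_eqF.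
pose s : seq (vec * R) := (- u, -1) :: [seq (v, 1) | v <- V].
have [Hf|Hf] := pselect (feasible s); last first.
  have Hsupp : forall c, c \in s -> supp_lt n c.1.
    by move=> c _ i ni; have := ltn_ord i; rewrite ltnNge ni.
  have [b [b0 cb]] := FM Hsupp Hf.
  have inv : forall a b, cone s a b -> exists mu sg y, [/\ 0 <= mu, N y <= sg, a = y - mu *: u & b = sg - mu].
    move=> a' b'; elim.
    - by exists 0, 0, 0; rewrite N0 scale0r subr0 subr0.
    - move=> a1 b1 a2 b2 _ [mu1 [sg1 [y1 [m1 n1 -> ->]]]] _ [mu2 [sg2 [y2 [m2 n2 -> ->]]]].
      exists (mu1 + mu2), (sg1 + sg2), (y1 + y2); split.
      + exact: addr_ge0.
      + by apply: le_trans (ND _ _) _; apply: lerD.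
      + by rewrite scalerDl opprD addrACA.
      + by rewrite opprD addrACA.
    - move=> c a1 b1 c0 _ [mu1 [sg1 [y1 [m1 n1 -> ->]]]].
      exists (c * mu1), (c * sg1), (c *: y1); split.
      + exact: mulr_ge0.
      + by rewrite NZ ger0_norm // ler_wpM2l.
      + by rewrite scalerBr scalerA.
      + by rewrite mulrBr.
    - move=> a1 b1; rewrite inE => /orP[/eqP [-> ->]|/mapP [v vV [-> ->]]].
        exists 1, 0, 0; split => //; rewrite ?N0 // ?scale1r ?sub0r //.
      exists 0, 1, v; split => //; rewrite ?scale0r ?subr0 //.
      exact: V_ball'.
  have [mu [sg [y [m0 ny e1 e2]]]] := inv _ _ cb.
  move/eqP: e1; rewrite eq_sym subr_eq0 => /eqP ey.
  move: ny; rewrite ey NZ Nu mulr1 ger0_norm // => h; lra.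
case: Hf => f hf.
have fd : dual_unit_ball N f.
  apply/dualP => i; rewrite dotC; have := hf (V`_i, 1); apply.
  by rewrite inE; apply/orP; right; apply/mapP; exists V`_i => //; apply: mem_nth.
exists f; split => //.
have h1 : 1 <= dot f u.
  have := hf (- u, -1); rewrite inE eqxx /= => /(_ isT); rewrite dotNl dotC; lra.
have h2 := dual_le u fd; rewrite Nu in h2.
have : dot f u = 1 by lra.
rewrite /u dotZr => /(congr1 (fun x => N z * x)); rewrite mulrA mulfV ?gt_eqF // mul1r mulr1 //.
Qed.

End WithV.
End Norm.


Section Minimal.
Variables (R : realType) (n : nat) (N : 'rV[R]_n -> R).
Hypothesis hN : is_norm N.
Local Notation vec := 'rV[R]_n.
Local Notation dot := (@dot R n).

Lemma conv_single m (a : 'I_m -> R) (W : 'I_m -> vec) v :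
  \sum_j a j = 1 -> (forall j, W j != v -> a j = 0) -> \sum_j a j *: W j = v.
Proof.
move=> a1 h; transitivity (\sum_j a j *: v); last by rewrite -scaler_suml a1 scale1r.
apply: eq_bigr => j _; have [->|ne] := eqVneq (W j) v => //.
by rewrite h // !scale0r.
Qed.

Lemma extreme_of_min (V : seq vec) :
  desc N V -> (forall V', desc N V' -> (size V <= size V')%N) ->
  forall v, v \in V -> extreme_point (unit_ball N) v.
Proof.
move=> hV hmin v vV; split; first exact: V_ball' hV v vV.
move=> y w t hy hw t01 ev.
pose V' := [seq x <- V | x != v].
have notV' : ~ in_conv_hull V' v.
  move=> vV'.
  have hV' : desc N V'.
    move=> x; split.
      move=> /hV [l [l0 l1 ->]]; apply: conv_comb => // j _.
      have [e|ne] := eqVneq V`_j v; first by rewrite e.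
      by apply: mem_conv; rewrite mem_filter ne mem_nth.
    move=> [l [l0 l1 ->]]; apply/hV; apply: conv_comb => // j _.
    apply: mem_conv; have : V'`_j \in V' by apply: mem_nth.
    by rewrite mem_filter => /andP[].
  have := hmin _ hV'; rewrite size_filter leqNgt; move/negP; apply.
  rewrite -[X in (_ < X)%N](count_predC (pred1 v)) -addn1 addnC leq_add2r.
  by rewrite -has_count; apply/hasP; exists v => //=.
have [a [a0 a1 ea]] := (hV y).1 hy.
have [b [b0 b1 eb]] := (hV w).1 hw.
pose c j := t * a j + (1 - t) * b j.
case/andP: t01 => t0 t1.
have t0' : 0 <= t by exact: ltW.
have t1' : 0 <= 1 - t by rewrite subr_ge0 ltW.
have c0 j : 0 <= c j by rewrite /c addr_ge0 // mulr_ge0.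
have c1 : \sum_j c j = 1.
  by rewrite big_split /= -!mulr_sumr a1 b1; ring.
have evc : v = \sum_j c j *: V`_j.
  rewrite ev ea eb !scaler_sumr -big_split /=; apply: eq_bigr => j _.
  by rewrite !scalerA scalerDl.
pose C := \sum_(j : 'I_(size V) | V`_j == v) c j.
have Cle : C <= 1.
  rewrite -c1 [X in _ <= X](bigID (fun j : 'I_(size V) => V`_j == v)) /= lerDl.
  by apply: sumr_ge0 => j _.
have CV : (1 - C) *: v = \sum_(j : 'I_(size V) | V`_j != v) c j *: V`_j.
  have := evc; rewrite (bigID (fun j : 'I_(size V) => V`_j == v)) /=.
  have -> : \sum_(j : 'I_(size V) | V`_j == v) c j *: V`_j = C *: v.
    by rewrite scaler_suml; apply: eq_bigr => j /eqP ->.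
  by move=> e; rewrite scalerBl scale1r {1}e addrAC subrr add0r.
have C1 : C = 1.
  apply/eqP; rewrite eq_le Cle /= leNgt; apply/negP => Clt.
  apply: notV'.
  have Cp : 0 < 1 - C by rewrite subr_gt0.
  pose l (j : 'I_(size V)) := if V`_j == v then 0 else c j / (1 - C).
  have -> : v = \sum_j l j *: V`_j.
    rewrite (bigID (fun j : 'I_(size V) => V`_j == v)) /= big1 ?add0r; last first.
      by move=> j h; rewrite /l h scale0r.
    have -> : \sum_(j : 'I_(size V) | V`_j != v) l j *: V`_j = (1 - C)^-1 *: \sum_(j : 'I_(size V) | V`_j != v) c j *: V`_j.
      rewrite scaler_sumr; apply: eq_bigr => j /negbTE h.
      by rewrite /l h scalerA mulrC.
    by rewrite -CV scalerA mulVf ?gt_eqF // scale1r.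
  apply: conv_comb.
  - move=> j; rewrite /l; case: ifP => _ //; rewrite divr_ge0 // ltW //.
  - rewrite (bigID (fun j : 'I_(size V) => V`_j == v)) /= big1 ?add0r; last first.
      by move=> j h; rewrite /l h.
    have -> : \sum_(j : 'I_(size V) | V`_j != v) l j = (1 - C)^-1 * \sum_(j : 'I_(size V) | V`_j != v) c j.
      rewrite mulr_sumr; apply: eq_bigr => j /negbTE h.
      by rewrite /l h mulrC.
    have -> : \sum_(j : 'I_(size V) | V`_j != v) c j = 1 - C.
      have : \sum_j c j = C + \sum_(j : 'I_(size V) | V`_j != v) c j.
        by rewrite (bigID (fun j : 'I_(size V) => V`_j == v)).
      rewrite c1; lra.
    by rewrite mulVf ?gt_eqF.
  - move=> j; rewrite /l; case: ifP => [_|/negbT ne _]; first by rewrite ltxx.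
    by apply: mem_conv; rewrite mem_filter ne mem_nth.
have cz (j : 'I_(size V)) : V`_j != v -> c j = 0.
  move=> ne; have : \sum_(j : 'I_(size V) | V`_j != v) c j = 0.
    have : \sum_j c j = C + \sum_(j : 'I_(size V) | V`_j != v) c j.
      by rewrite (bigID (fun j : 'I_(size V) => V`_j == v)).
    rewrite c1 C1; lra.
  move/eqP; rewrite psumr_eq0; last by move=> j' _; exact: c0.
  by move=> /allP /(_ j (mem_index_enum _)); rewrite ne => /implyP /(_ isT) /eqP.
have az (j : 'I_(size V)) : V`_j != v -> a j = 0.
  move=> ne; have := cz j ne; rewrite /c => h.
  have h1 : 0 <= t * a j by rewrite mulr_ge0.
  have h2 : 0 <= (1 - t) * b j by rewrite mulr_ge0.
  have : t * a j = 0 by lra.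
  by move/eqP; rewrite mulf_eq0 gt_eqF //= => /eqP.
have bz (j : 'I_(size V)) : V`_j != v -> b j = 0.
  move=> ne; have := cz j ne; rewrite /c => h.
  have h1 : 0 <= t * a j by rewrite mulr_ge0.
  have h2 : 0 <= (1 - t) * b j by rewrite mulr_ge0.
  have : (1 - t) * b j = 0 by lra.
  have tn : 1 - t != 0 by rewrite subr_eq0 eq_sym lt_eqF.
  by move/eqP; rewrite mulf_eq0 (negbTE tn) /= => /eqP.
by rewrite ea eb (conv_single a1 az) (conv_single b1 bz).
Qed.

Lemma min_desc : polyhedral N ->
  exists V, desc N V /\ forall v, v \in V -> extreme_point (unit_ball N) v.
Proof.
move=> [V0 hV0].
have ex : exists k, `[< exists V : seq vec, size V = k /\ desc N V >].
  by exists (size V0); apply/asboolP; exists V0.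
case: (ex_minnP ex) => k /asboolP [V [sV hV]] hmin.
exists V; split => //; apply: extreme_of_min => // V' hV'.
by rewrite sV; apply: hmin; apply/asboolP; exists V'.
Qed.

End Minimal.


Section Eps.
Variable R : realType.
Lemma eps_seq (I : eqType) (s : seq I) (P : I -> R -> Prop) :
  (forall i, i \in s -> exists2 e, 0 < e & forall e', 0 < e' <= e -> P i e') ->
  exists2 e, 0 < e & forall e', 0 < e' <= e -> forall i, i \in s -> P i e'.
Proof.
elim: s => [|a s IH] H; first by exists 1.
have [e e0 He] := IH (fun i iS => H i ltac:(by rewrite inE iS orbT)).
have [ea ea0 Ha] := H a (mem_head _ _).
exists (Num.min e ea); first by rewrite lt_min e0 ea0.
move=> e' /andP[e'0 e'le] i; rewrite inE => /orP[/eqP ->|iS].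
  by apply: Ha; rewrite e'0 /=; apply: le_trans e'le _; rewrite ge_min lexx orbT.
by apply: He => //; rewrite e'0 /=; apply: le_trans e'le _; rewrite ge_min lexx.
Qed.

Lemma eps_fin (I : finType) (P : I -> R -> Prop) :
  (forall i, exists2 e, 0 < e & forall e', 0 < e' <= e -> P i e') ->
  exists2 e, 0 < e & forall i, P i e.
Proof.
move=> H; have [e e0 He] : exists2 e, 0 < e & forall e', 0 < e' <= e -> forall i, i \in enum I -> P i e'.
  by apply: eps_seq => i _; apply: H.
by exists e => // i; apply: He; rewrite ?e0 ?lexx ?mem_enum.
Qed.

Lemma conv_eq (t a b M : R) : 0 < t < 1 -> a <= M -> b <= M ->
  t * a + (1 - t) * b = M -> a = M /\ b = M.
Proof.
move=> /andP[t0 t1] aM bM e.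
have h1 : 0 <= t * (M - a) by rewrite mulr_ge0 ?subr_ge0 // ltW.
have h2 : 0 <= (1 - t) * (M - b) by rewrite mulr_ge0 ?subr_ge0 // ltW.
have h3 : t * (M - a) + (1 - t) * (M - b) = 0 by rewrite -e; ring.
have e1 : t * (M - a) = 0 by lra.
have e2 : (1 - t) * (M - b) = 0 by lra.
have ha : M - a = 0 by apply/eqP; move/eqP: e1; rewrite mulf_eq0 gt_eqF.
have tn : 1 - t != 0 by rewrite subr_eq0 eq_sym lt_eqF.
have hb : M - b = 0 by apply/eqP; move/eqP: e2; rewrite mulf_eq0 (negbTE tn).
split; lra.
Qed.
End Eps.

Section Vertex.
Variables (R : realType) (n : nat) (N : 'rV[R]_n -> R).
Hypothesis hN : is_norm N.
Local Notation vec := 'rV[R]_n.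
Local Notation dot := (@dot R n).
Variable V : seq vec.
Hypothesis hV : desc N V.

Definition act_set (f : vec) := [set j : 'I_(size V) | dot f V`_j == 1].

Lemma exists_pos (d : vec) : d != 0 -> exists j : 'I_(size V), 0 < dot d V`_j.
Proof.
move=> dn0; case: (pselect (exists j : 'I_(size V), 0 < dot d V`_j)) => // H.
have x := dot_self_gt0 dn0; exfalso.
have Hj (j : 'I_(size V)) : dot d V`_j <= 0 by rewrite leNgt; apply/negP => h; apply: H; exists j.
have Nd := Ngt0 hN dn0.
have : N ((N d)^-1 *: d) <= 1.
  have Nd' : 0 <= N d := ltW Nd.
  by rewrite NZ // ger0_norm ?invr_ge0 // mulVf ?gt_eqF.
move/hV => [c [c0 c1 ec]].
have : dot d ((N d)^-1 *: d) <= 0.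
  rewrite ec dot_sumr_ord; apply: sumr_le0 => j _.
  by rewrite mulr_ge0_le0.
rewrite dotZr pmulr_rle0 ?invr_gt0 // leNgt.
by rewrite x.
Qed.

Lemma vertex z f0 : dual_unit_ball N f0 -> dot f0 z = N z ->
  exists f, extreme_point (dual_unit_ball N) f /\ dot f z = N z.
Proof.
move=> f0d f0z.
pose P k := `[< exists f, [/\ dual_unit_ball N f, dot f z = N z & #|act_set f| = k] >].
have ex : exists k, P k by exists #|act_set f0|; apply/asboolP; exists f0.
have bnd : forall k, P k -> (k <= size V)%N.
  move=> k /asboolP [f [_ _ <-]]; apply: leq_trans (max_card _) _.
  by rewrite card_ord.
case: (ex_maxnP ex bnd) => k /asboolP [f [fd fz fk]] kmax.
exists f; split => //; split => // y w t yd wd t01 ef.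
have [//|ne] := eqVneq y w; exfalso.
pose d := w - y.
have dn0 : d != 0 by rewrite subr_eq0 eq_sym.
have [yz wz] : dot y z = N z /\ dot w z = N z.
  apply: (conv_eq t01); try exact: dual_le.
  by rewrite -fz ef dotDl !dotZl.
have dz : dot d z = 0 by rewrite dotBl wz yz subrr.
have dact j : j \in act_set f -> dot d V`_j = 0.
  rewrite inE => /eqP fj.
  have [y1 w1] : dot y V`_j = 1 /\ dot w V`_j = 1.
    apply: (conv_eq t01); [exact: (dualP hV _).1 yd j | exact: (dualP hV _).1 wd j|].
    by rewrite ef dotDl !dotZl in fj.
  by rewrite dotBl y1 w1 subrr.
have [j0 j0p] := exists_pos dn0.
pose J := [pred j : 'I_(size V) | 0 < dot d V`_j].
pose r (j : 'I_(size V)) := (1 - dot f V`_j) / dot d V`_j.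
have fle (j : 'I_(size V)) : dot f V`_j <= 1 by exact: (dualP hV _).1 fd j.
case: (@arg_minP _ _ _ j0 J r j0p) => jm Jm jmin.
have Jm' : 0 < dot d V`_jm by exact: Jm.
have rm0 : 0 <= r jm by rewrite /r divr_ge0 ?subr_ge0 // ltW.
pose g := f + r jm *: d.
have gV j : dot g V`_j = dot f V`_j + r jm * dot d V`_j by rewrite dotDl dotZl.
have gd : dual_unit_ball N g.
  apply/(dualP hV) => j; rewrite gV.
  have [jJ|jJ] := boolP (j \in J).
    have := jmin j jJ; rewrite /r ler_pdivlMr // => h.
    move: jJ; rewrite inE => jJ.
    have : (1 - dot f V`_j) / dot d V`_j * dot d V`_j = 1 - dot f V`_j.
      by rewrite divfK ?gt_eqF.
    rewrite /r in h *. lra.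
  move: jJ; rewrite inE -leNgt => jJ.
  have : r jm * dot d V`_j <= 0 by rewrite mulr_ge0_le0.
  have := fle j; lra.
have gz : dot g z = N z by rewrite dotDl dotZl dz mulr0 addr0.
have sub : act_set f \proper act_set g.
  apply/properP; split.
    apply/fintype.subsetP => j ja; move: (ja); rewrite !inE gV dact // mulr0 addr0.
    by [].
  exists jm; first by rewrite inE gV /r (divfK (lt0r_neq0 Jm')) addrC subrK.
  by rewrite inE; apply/negP => /eqP h; move: Jm'; rewrite dact ?ltxx // inE h.
have := proper_card sub; rewrite fk ltnNge; move/negP; apply.
by apply: kmax; apply/asboolP; exists g.
Qed.

Lemma ext_unique f g : extreme_point (dual_unit_ball N) f ->
  extreme_point (dual_unit_ball N) g -> act_set f = act_set g -> f = g.
Proof.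
move=> [fd fext] [gd _] eact.
pose d := g - f.
have dact (j : 'I_(size V)) : dot f V`_j = 1 -> dot d V`_j = 0.
  move=> fj; have : j \in act_set g by rewrite -eact inE fj.
  by rewrite inE => /eqP gj; rewrite dotBl gj fj subrr.
have fle (j : 'I_(size V)) : dot f V`_j <= 1 by exact: (dualP hV _).1 fd j.
have [e e0 He] : exists2 e, 0 < e & forall j : 'I_(size V), dot f V`_j + e * `|dot d V`_j| <= 1.
  apply: (@eps_fin R _ (fun (j : 'I_(size V)) e => dot f V`_j + e * `|dot d V`_j| <= 1)) => j.
  pose dd := `|dot d V`_j|.
  have [d0|d0] := eqVneq dd 0.
    exists 1 => // e' _; rewrite /dd in d0; rewrite d0 mulr0 addr0 //.
  have flt : dot f V`_j < 1.
    rewrite lt_neqAle fle andbT; apply/eqP => h.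
    by move: d0; rewrite /dd dact // normr0 eqxx.
  have ddp : 0 < dd by rewrite lt_def d0 normr_ge0.
  exists ((1 - dot f V`_j) / dd); first by rewrite divr_gt0 // subr_gt0.
  move=> e' /andP[_ h]; move: h; rewrite ler_pdivlMr // => h.
  rewrite /dd in h *; lra.
have hpm (s : R) : `|s| <= 1 -> dual_unit_ball N (f + (s * e) *: d).
  move=> s1; apply/(dualP hV) => j; rewrite dotDl dotZl.
  apply: le_trans (He j); rewrite lerD2l.
  apply: le_trans (ler_norm _) _; rewrite !normrM (ger0_norm (ltW e0)).
  rewrite -mulrA; have hp : 0 <= e * `|dot d V`_j| by rewrite mulr_ge0 ?normr_ge0 // ltW.
  by apply: le_trans (ler_wpM2r hp s1) _; rewrite mul1r.
have h1 := hpm 1 ltac:(by rewrite normr1).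
have h2 := hpm (-1) ltac:(by rewrite normrN normr1).
have := fext _ _ (2^-1) h1 h2.
have t01 : 0 < (2^-1 : R) < 1.
  by rewrite invr_gt0 ltr0n /= invf_lt1 ?ltr0n // ltr1n.
move=> /(_ t01).
have e1 : f = 2^-1 *: (f + (1 * e) *: d) + (1 - 2^-1) *: (f + (-1 * e) *: d).
  have -> : (1 - 2^-1 : R) = 2^-1 by field.
  rewrite -scalerDr mul1r mulN1r scaleNr addrACA subrr addr0.
  by rewrite -mulr2n -scaler_nat scalerA mulVf ?pnatr_eq0 // scale1r.
move=> /(_ e1) /eqP; rewrite mul1r mulN1r scaleNr (can_eq (addKr f)) -subr_eq0 opprK.
rewrite -mulr2n -scaler_nat scaler_eq0 pnatr_eq0 /= scaler_eq0 (gt_eqF e0) /= subr_eq0.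
by move=> /eqP ->.
Qed.

Lemma ext_finite : exists Ef : seq vec,
  forall f, extreme_point (dual_unit_ball N) f -> f \in Ef.
Proof.
suff H : forall L : seq {set 'I_(size V)}, exists Ef : seq vec,
  forall f, extreme_point (dual_unit_ball N) f -> act_set f \in L -> f \in Ef.
  have [Ef hE] := H (enum {set 'I_(size V)}).
  exists Ef => f fe; apply: (hE f fe); exact: mem_enum.
elim => [|S L [Ef hE]]; first by exists [::].
have [[g [ge gS]]|nog] := pselect (exists g, extreme_point (dual_unit_ball N) g /\ act_set g = S).
  exists (g :: Ef) => f fe; rewrite inE => /orP[/eqP fS|fL].
    by rewrite (ext_unique fe ge) ?inE ?eqxx // fS gS.
  by rewrite inE hE ?orbT.
exists Ef => f fe; rewrite inE => /orP[/eqP fS|fL]; last exact: hE.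
by exfalso; apply: nog; exists f.
Qed.

End Vertex.



Lemma seq_ub (R : realType) (T : eqType) (s : seq T) (g : T -> R) :
  exists M, forall p, p \in s -> g p <= M.
Proof.
elim: s => [|a s [M HM]]; first by exists 0.
exists (Num.max (g a) M) => p; rewrite inE => /orP[/eqP ->|/HM h].
  by rewrite le_max lexx.
by rewrite le_max h orbT.
Qed.

Lemma seq_ub_strict (R : realType) (T : eqType) (s : seq T) (g : T -> R) L :
  (forall p, p \in s -> g p < L) -> exists2 M, M < L & forall p, p \in s -> g p <= M.
Proof.
elim: s => [|a s IH] H; first by exists (L - 1) => //; lra.
have [M ML HM] : exists2 M, M < L & forall p, p \in s -> g p <= M.
  by apply: IH => p ps; apply: H; rewrite inE ps orbT.
exists (Num.max (g a) M); first by rewrite gt_max ML H // inE eqxx.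
move=> p; rewrite inE => /orP[/eqP ->|/HM h]; first by rewrite le_max lexx.
by rewrite le_max h orbT.
Qed.

Section OpNorm.
Variables (R : realType) (n : nat) (N : 'rV[R]_n -> R).
Hypothesis hN : is_norm N.
Local Notation vec := 'rV[R]_n.
Local Notation dot := (@dot R n).
Variable V : seq vec.
Hypothesis hV : desc N V.
Variable Ef : seq vec.
Hypothesis hEf : forall z, exists2 f, f \in Ef & dot f z = N z.

Lemma bound_ball (Q : 'M[R]_n) M :
  (forall x f, x \in V -> f \in Ef -> dot f (x *m Q) <= M) ->
  forall x, N x <= 1 -> N (x *m Q) <= M.
Proof.
move=> H x /hV [c [c0 c1 ->]].
rewrite mulmx_suml; under eq_bigr do rewrite -scalemxAl.
apply: (le_trans (@N_conv _ _ _ hN _ c (fun j => V`_j *m Q) c0)).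
rewrite -[leRHS]mul1r -c1 mulr_suml; apply: ler_sum => j _.
apply: ler_wpM2l => //; have [f fE <-] := hEf (V`_j *m Q).
by apply: H => //; apply: mem_nth.
Qed.

Lemma has_ub_op (Q : 'M[R]_n) : has_ubound [set N (x *m Q) | x in unit_ball N].
Proof.
have [M HM] := seq_ub [seq (x, f) | x <- V, f <- Ef] (fun p => dot p.2 (p.1 *m Q)).
exists M => _ [x xb <-]; apply: bound_ball xb => y f yV fE.
by have := HM (y, f); apply; apply/allpairsP; exists (y, f).
Qed.

Lemma opnorm_ub (Q : 'M[R]_n) x : N x <= 1 -> N (x *m Q) <= opnorm N Q.
Proof. by move=> xb; apply: (ub_le_sup (has_ub_op Q)); exists x. Qed.

Lemma opnorm_le (Q : 'M[R]_n) M :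
  (forall x f, x \in V -> f \in Ef -> dot f (x *m Q) <= M) -> opnorm N Q <= M.
Proof.
move=> H; apply: ge_sup.
  exists (N (0 *m Q)), 0 => //; by rewrite /unit_ball /= N0 // ler01.
by move=> _ [x xb <-]; apply: bound_ball.
Qed.

Lemma opnorm_ge0 (Q : 'M[R]_n) : 0 <= opnorm N Q.
Proof.
have := @opnorm_ub Q 0; rewrite mul0mx N0 // ler01; by apply.
Qed.

Lemma inf_le_op (Y P : 'M[R]_n) : is_projection Y P -> rel_proj_const N Y <= opnorm N P.
Proof.
move=> hP; apply: ge_inf; last by exists P.
by exists 0 => _ [Q _ <-]; exact: opnorm_ge0.
Qed.

End OpNorm.

Definition Phi (R : realType) n a b (A : 'M[R]_(n, a)) (B : 'M[R]_(b, n))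
  (M : 'M[R]_(a, b)) : 'M[R]_n := A *m M *m B.
Fact Phi_is_semilinear (R : realType) n a b (A : 'M[R]_(n, a)) (B : 'M[R]_(b, n)) :
  semilinear (Phi A B).
Proof.
split=> [c M|M1 M2]; rewrite /Phi /=.
  by rewrite -scalemxAr -scalemxAl.
by rewrite mulmxDr mulmxDl.
Qed.
HB.instance Definition _ (R : realType) n a b (A : 'M[R]_(n, a)) (B : 'M[R]_(b, n)) :=
  GRing.isSemilinear.Build R 'M[R]_(a, b) 'M[R]_n _ (Phi A B) (Phi_is_semilinear A B).

Definition Psi (R : realType) n (s : seq ('rV[R]_n * 'rV[R]_n)) (D : 'M[R]_n) :
  'rV[R]_(size s) := \row_i dot (nth (0, 0) s i).2 ((nth (0, 0) s i).1 *m D).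
Fact Psi_is_semilinear (R : realType) n (s : seq ('rV[R]_n * 'rV[R]_n)) :
  semilinear (Psi s).
Proof.
split=> [c M|M1 M2]; apply/rowP => i; rewrite !mxE /=.
  by rewrite -scalemxAr dotZr.
by rewrite mulmxDr dotDr.
Qed.
HB.instance Definition _ (R : realType) n (s : seq ('rV[R]_n * 'rV[R]_n)) :=
  GRing.isSemilinear.Build R 'M[R]_n 'rV[R]_(size s) _ (Psi s) (Psi_is_semilinear s).


Lemma free_scaled (K : fieldType) (vT : vectType K) d (X : d.-tuple vT) (ts : 'I_d -> K) :
  free X -> (forall i, ts i != 0) -> free [seq ts i *: X`_i | i : 'I_d].
Proof.
move=> fX ts0.
pose Y := [tuple ts i *: X`_i | i < d].
have -> : [seq ts i *: X`_i | i : 'I_d] = Y.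
  by rewrite /Y /= /image_mem enumT.
apply/freeP => k hk i.
move/freeP: fX => /(_ (fun i => k i * ts i)) h.
have : k i * ts i = 0.
  apply: h; rewrite -[RHS]hk; apply: eq_bigr => j _; by rewrite nth_mktuple scalerA.
by move/eqP; rewrite mulf_eq0 (negbTE (ts0 i)) orbF => /eqP.
Qed.

Theorem mainTheorem9 (R : realType) (n : nat) (N : 'rV[R]_n -> R)
    (Y : 'M[R]_n) (k m : nat) (P0 : 'M[R]_n) :
  is_norm N -> polyhedral N ->
  \rank Y = k -> (1 <= k)%N -> (k <= n - 1)%N ->
  Pmin N Y P0 ->
  (forall s : seq ('rV[R]_n * 'rV[R]_n),
      uniq s -> (forall xf, xf \in s -> norming_pair N P0 xf) ->
      (size s <= m)%N) ->
  ((k * (n - k))%:Z - m%:Z + 1 <= (affdim (Pmin N Y))%:Z)%R.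
Proof.
move=> hN hpoly rY k1 kn hP0 hm.
have [V [hV hVext]] := min_desc hpoly.
have [Ef0 hEf0] := ext_finite hV.
pose Ef := [seq f <- Ef0 | `[< extreme_point (dual_unit_ball N) f >]].
have hEfext : forall f, f \in Ef -> extreme_point (dual_unit_ball N) f.
  by move=> f; rewrite mem_filter => /andP[/asboolP h _].
have hEfatt : forall z, exists2 f, f \in Ef & dot f z = N z.
  move=> z; have [f0 [f0d f0z]] := dual_attain hN hV z.
  have [f [fe fz]] := vertex hN hV f0d f0z.
  exists f => //; rewrite mem_filter hEf0 // andbT; exact/asboolP.
case: (hP0) => P0proj P0eq.
set lam := opnorm N P0 in P0eq.
pose PR := [seq (x, f) | x <- V, f <- Ef].
pose s := undup [seq p <- PR | `[< norming_pair N P0 p >]].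
have sm : (size s <= m)%N.
  apply: hm; first exact: undup_uniq.
  by move=> xf; rewrite mem_undup mem_filter => /andP[/asboolP].
have s_norm : forall p, p \in s -> dot p.2 (p.1 *m P0) = lam.
  by move=> p; rewrite mem_undup mem_filter => /andP[/asboolP [_ _ ->]].
have nn_lt : forall x f, x \in V -> f \in Ef -> (x, f) \notin s ->
    dot f (x *m P0) < lam.
  move=> x f xV fE xs; rewrite lt_neqAle; apply/andP; split.
    apply/eqP => e; move/negP: xs; apply; rewrite mem_undup mem_filter.
    apply/andP; split.
      by apply/asboolP; split => //; [exact: hVext | exact: hEfext].
    by apply/allpairsP; exists (x, f).
  apply: le_trans (dual_le hN _ (hEfext f fE).1) _.
  exact: (opnorm_ub hN hV hEfatt _ (hVext x xV).1).
have valD : forall (x f : 'rV[R]_n) D t,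
    dot f (x *m (P0 + t *: D)) = dot f (x *m P0) + t * dot f (x *m D).
  by move=> x f D t; rewrite mulmxDr -scalemxAr dotDr dotZr.
have local : forall D, exists2 t, 0 < t & forall x f, x \in V -> f \in Ef ->
    (x, f) \notin s -> dot f (x *m (P0 + t *: D)) < lam.
  move=> D.
  have [e e0 He] : exists2 e, 0 < e & forall e', 0 < e' <= e -> forall p, p \in PR ->
      p \notin s -> dot p.2 (p.1 *m (P0 + e' *: D)) < lam.
    apply: eps_seq => -[x f] xfP.
    have [xs|xs] := boolP ((x, f) \in s); first by exists 1 => // e' _; rewrite xs.
    have [xV fE] : x \in V /\ f \in Ef.
      by case/allpairsP: xfP => -[x' f'] /= [xV fE [-> ->]].
    have gap := nn_lt x f xV fE xs.
    pose c := dot f (x *m D).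
    exists ((lam - dot f (x *m P0)) / (1 + `|c|)).
      by rewrite divr_gt0 ?subr_gt0 // ltr_pwDl ?normr_ge0.
    move=> e' /andP[e'0 e'le] _ /=; rewrite valD.
    have hc : 0 < 1 + `|c| by rewrite ltr_pwDl ?normr_ge0.
    move: e'le; rewrite ler_pdivlMr // => h.
    have h2 : e' * c <= e' * `|c| by apply: ler_wpM2l; [exact: ltW | exact: ler_norm].
    rewrite -/c; nra.
  exists e => // x f xV fE xs; apply: (He e _ (x, f)) => //; first by rewrite e0 lexx.
  by apply/allpairsP; exists (x, f).
pose Yc := (Y^C)%MS.
pose C := row_base Yc.
pose Yb := row_base Y.
pose A := proj_mx Yc Y *m pinvmx C.
pose Ph := linfun (Phi A Yb).
pose W := limg Ph.
have dxY : (Yc :&: Y = 0)%MS by rewrite capmxC capmx_compl.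
have CA : C *m A = 1%:M.
  apply: (row_free_inj (row_base_free Yc)).
  rewrite mul1mx /A mulmxA proj_mx_id //; last by rewrite /C eq_row_base.
  by rewrite mulmxKpV.
have Winj : lker Ph == 0%VS.
  apply/lker0P => M1 M2; rewrite !lfunE /= /Phi => e.
  have CPhi : forall M, C *m (A *m M *m Yb) = M *m Yb.
    by move=> M; rewrite (mulmxA C (A *m M) Yb) (mulmxA C A M) CA mul1mx.
  have : C *m (A *m M1 *m Yb) = C *m (A *m M2 *m Yb) by rewrite e.
  rewrite !CPhi; exact: (row_free_inj (row_base_free Y)).
have dimW : \dim W = (\rank Yc * \rank Y)%N.
  by rewrite /W limg_dim_eq ?dimvf ?dim_matrix // (eqP Winj) capv0.
have rYc : \rank Yc = (n - k)%N by rewrite mxrank_compl rY.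
have Wprop : forall D, D \in W -> (D <= Y)%MS /\ forall x : 'rV[R]_n, (x <= Y)%MS -> x *m D = 0.
  move=> D /memv_imgP [M _ ->]; rewrite lfunE /= /Phi; split.
    by apply: submx_trans (submxMl _ _) _; rewrite /Yb eq_row_base.
  move=> x xY; rewrite (mulmxA x (A *m M) Yb) (mulmxA x A M) /A (mulmxA x (proj_mx Yc Y)).
  by rewrite proj_mx_0 // !mul0mx.
have proj : forall D t, D \in W -> is_projection Y (P0 + t *: D).
  move=> D t /Wprop [DY Dx]; case: P0proj => P0Y P0id; split.
    by rewrite addmx_sub // scalemx_sub.
  by move=> x xY; rewrite mulmxDr -scalemxAr Dx // scaler0 addr0 P0id.
pose Ps := linfun (Psi s).
have PsiE : forall D p, p \in s -> exists i, dot p.2 (p.1 *m D) = Ps D 0 i.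
  move=> D p ps.
  have ip : (index p s < size s)%N by rewrite index_mem.
  by exists (Ordinal ip); rewrite lfunE /= /Psi mxE /= nth_index.
have img_lt : (\dim (Ps @: W) < size s)%N.
  rewrite ltn_neqAle; apply/andP; split; last first.
    apply: leq_trans (dimvS (subvf _)) _; rewrite dimvf (@dim_matrix R 1 (size s)); lia.
  apply/negP => /eqP eqd.
  have full : (Ps @: W)%VS = fullv.
    apply/eqP; rewrite eqEdim subvf /= dimvf (@dim_matrix R 1 (size s)) eqd; lia.
  have : const_mx (-1) \in (Ps @: W)%VS by rewrite full memvf.
  case/memv_imgP => D DW eD.
  have [t t0 Ht] := local D.
  have pr := proj D t DW.
  have : opnorm N (P0 + t *: D) < lam.
    have [M Ml HM] : exists2 M, M < lam & forall p, p \in PR ->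
        dot p.2 (p.1 *m (P0 + t *: D)) <= M.
      apply: seq_ub_strict.
      move=> [x f] /allpairsP [[x' f'] /= [xV fE [-> ->]]].
      have [xs|xs] := boolP ((x', f') \in s); last exact: Ht.
      rewrite valD (s_norm _ xs) /=.
      have [i ->] := PsiE D _ xs; rewrite -eD mxE; lra.
    apply: le_lt_trans Ml; apply: (opnorm_le hN hV hEfatt) => x f xV fE.
    by apply: (HM (x, f)); apply/allpairsP; exists (x, f).
  have := inf_le_op hN hV hEfatt pr; rewrite -P0eq => h1 h2.
  by have := lt_le_trans h2 h1; rewrite ltxx.
pose K := (W :&: lker Ps)%VS.
have dimK := limg_ker_dim Ps W.
pose X := vbasis K.
have fX : free X := basis_free (vbasisP K).
have XK : forall i : 'I_(\dim K), X`_i \in K.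
  by move=> i; apply: vbasis_mem; apply: mem_nth; rewrite size_tuple.
have good : forall i : 'I_(\dim K), exists t, 0 < t /\ Pmin N Y (P0 + t *: X`_i).
  move=> i; have := XK i; rewrite memv_cap => /andP[DW]; rewrite memv_ker => /eqP D0.
  have [t t0 Ht] := local X`_i; exists t; split => //.
  have pr := proj _ t DW; split => //.
  apply/eqP; rewrite eq_le; apply/andP; split; last exact: (inf_le_op hN hV hEfatt pr).
  rewrite -P0eq; apply: (opnorm_le hN hV hEfatt) => x f xV fE.
  have [xs|xs] := boolP ((x, f) \in s); last exact/ltW/Ht.
  rewrite valD (s_norm _ xs) /=; have [j ->] := PsiE X`_i _ xs.
  by rewrite D0 mxE mulr0 addr0.
case: (choice good) => ts hts.
pose Pf (i : 'I_(\dim K).+1) := if unlift ord0 i is Some j then P0 + ts j *: X`_j else P0.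
have aff : aff_indep_in (Pmin N Y) (\dim K).
  exists Pf; split.
    move=> i; rewrite /Pf; case: unliftP => [j _|_]; [exact: (hts j).2 | exact: hP0].
  have -> : [seq Pf (lift ord0 i) - Pf ord0 | i : 'I_(\dim K)] =
            [seq ts i *: X`_i | i : 'I_(\dim K)].
    by apply: eq_map => i; rewrite /Pf liftK unlift_none addrC addKr.
  by apply: free_scaled fX _ => i; exact: lt0r_neq0 (hts i).1.
have dK_le : (\dim K <= affdim (Pmin N Y))%N.
  have hlt : (\dim K < (n * n).+1)%N.
    by rewrite ltnS; apply: leq_trans (dimvS (subvf K)) _; rewrite dimvf dim_matrix.
  rewrite /affdim; apply: (@leq_bigmax_cond _ _ _ (Ordinal hlt)) => /=; exact/asboolP.
move: dimK; rewrite -/K dimW rYc rY => dimK.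
lia.
Qed.
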